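(* Let $A=\mathrm{diag}(\mathbf{a})$ with $\mathbf{a}\in\mathbb{R}^n$, $\beta>0$, $f(\mathbf{z})=\frac12\mathbf{z}^*A\mathbf{z}+\frac{\beta}{2}\sum_k|z_k|^4$. A point $\mathbf{z}\in\mathbb{CS}^{n-1}$ is a local minimizer of $f$ on $\mathbb{CS}^{n-1}$ if and only if $\mathbf{z}$ is stationary and $H=A+2\beta\,\mathrm{diag}(|\mathbf{z}|^2)-2\lambda I\succeq0$, where $\lambda=\frac12\mathbf{z}^*A\mathbf{z}+\beta\|\mathbf{z}\|_4^4$. Moreover, every local minimizer $\mathbf{z}$ satisfies $z_k=\sqrt{u_k}\,e^{i\theta_k}$ for some $\theta_k\in[0,2\pi)$, $k\in[n]$, where $\mathbf{u}=\mathcal{P}_{\Delta_n}(-\mathbf{a}/(2\beta))$.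
   Context: $\mathbb{CS}^{n-1}$ is the unit sphere of $\mathbb{C}^n$; stationarity means $[A+2\beta\,\mathrm{diag}(|\mathbf{z}|^2)]\mathbf{z}=2\lambda\mathbf{z}$ with $|\mathbf{z}|^2=(|z_1|^2,\dots,|z_n|^2)$. $\Delta_n=\{\mathbf{u}\in\mathbb{R}^n:u_k\ge0,\ \sum_ku_k=1\}$ is the simplex and $\mathcal{P}_{\Delta_n}$ is the Euclidean projection onto it. *)

(* Defs.v *)
From HB Require Import structures.
From mathcomp Require Import all_boot all_order all_algebra.
From mathcomp Require Import complex.
From mathcomp Require Import reals trigo.
Set Implicit Arguments. Unset Strict Implicit. Unset Printing Implicit Defensive.
Import Order.TTheory GRing.Theory Num.Theory ComplexField.
Local Open Scope ring_scope.

Section Defs.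
Variables (R : realType) (n : nat).
Notation C := R[i].

Definition cmod (w : C) : R := Normc.normc w.

Definition abs2 (z : 'I_n -> C) (k : 'I_n) : R := cmod (z k) ^+ 2.

Definition Adiag (a : 'I_n -> R) : 'M[C]_n := diag_mx (\row_k ((a k)%:C)%C).

Definition colv (z : 'I_n -> C) : 'cV[C]_n := \col_k z k.
Definition adj (v : 'cV[C]_n) : 'rV[C]_n := map_mx conjc v^T.

Definition qform (M : 'M[C]_n) (v : 'cV[C]_n) : C := (adj v *m M *m v) 0 0.

Definition on_sphere (z : 'I_n -> C) : Prop := \sum_k abs2 z k = 1.

(* f(z) = 1/2 z^* A z + beta/2 sum_k |z_k|^4 (real-valued; z^*Az is real since A is real diagonal) *)
Definition fobj (a : 'I_n -> R) (beta : R) (z : 'I_n -> C) : R :=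
  2^-1 * complex.Re (qform (Adiag a) (colv z)) + beta / 2 * \sum_k cmod (z k) ^+ 4.

Definition lam (a : 'I_n -> R) (beta : R) (z : 'I_n -> C) : R :=
  2^-1 * complex.Re (qform (Adiag a) (colv z)) + beta * \sum_k cmod (z k) ^+ 4.

Definition local_min_sphere (a : 'I_n -> R) (beta : R) (z : 'I_n -> C) : Prop :=
  on_sphere z /\
  exists eps : R, 0 < eps /\
    forall w : 'I_n -> C, on_sphere w ->
      \sum_k cmod (w k - z k) ^+ 2 < eps ^+ 2 -> fobj a beta z <= fobj a beta w.

Definition Mstat (a : 'I_n -> R) (beta : R) (z : 'I_n -> C) : 'M[C]_n :=
  Adiag a + diag_mx (\row_k ((2 * beta * abs2 z k)%:C)%C).

Definition stationary (a : 'I_n -> R) (beta : R) (z : 'I_n -> C) : Prop :=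
  exists l : R, Mstat a beta z *m colv z = ((2 * l)%:C)%C *: colv z.

Definition Hmat (a : 'I_n -> R) (beta : R) (z : 'I_n -> C) : 'M[C]_n :=
  Mstat a beta z - ((2 * lam a beta z)%:C)%C%:M.

Definition psd (M : 'M[C]_n) : Prop := forall v : 'cV[C]_n, 0 <= qform M v.

Definition in_simplex (u : 'I_n -> R) : Prop :=
  (forall k, 0 <= u k) /\ \sum_k u k = 1.
Definition is_proj_simplex (x u : 'I_n -> R) : Prop :=
  in_simplex u /\
  forall v, in_simplex v -> \sum_k (u k - x k) ^+ 2 <= \sum_k (v k - x k) ^+ 2.

End Defs.

(* Main.v *)
Require Import Defs.
From HB Require Import structures.
From mathcomp Require Import all_boot all_order all_algebra.
From mathcomp Require Import complex.
From mathcomp Require Import reals trigo.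
From mathcomp Require Import ring lra.
Import Order.TTheory GRing.Theory Num.Theory ComplexField.
Local Open Scope ring_scope.
Section C.
Variable R : realType.
Local Open Scope complex_scope.

Lemma cmod2 (w : R[i]) : cmod w ^+ 2 = complex.Re w ^+ 2 + complex.Im w ^+ 2.
Proof. by case: w => x y /=; rewrite /cmod /= sqr_sqrtr // addr_ge0 // sqr_ge0. Qed.

Lemma cmod_ge0 (w : R[i]) : 0 <= cmod w.
Proof. by case: w => x y; rewrite /cmod /= sqrtr_ge0. Qed.

Lemma conjM (w : R[i]) : w^* * w = (cmod w ^+ 2)%:C.
Proof. rewrite cmod2; case: w => x y /=; simpc; apply/eqP; rewrite eq_complex /=; apply/andP; split; apply/eqP; ring. Qed.

Lemma le0c (c : R[i]) : (0 <= c) = (complex.Im c == 0) && (0 <= complex.Re c).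
Proof. by rewrite lecE /= eq_sym. Qed.

Lemma normc_real (x : R) : cmod (x%:C) = `|x|.
Proof. by rewrite /cmod /= expr0n /= addr0 sqrtr_sqr. Qed.

Lemma cmodM (x y : R[i]) : cmod (x * y) = cmod x * cmod y.
Proof. exact: Normc.normcM. Qed.

Lemma cmod0 (x : R[i]) : (cmod x == 0) = (x == 0).
Proof.
apply/eqP/eqP => [|->]; first exact: Normc.eq0_normc.
exact: Normc.normc0.
Qed.

Variable n : nat.

Lemma qform_diagE (M : 'M[R[i]]_n) (d : 'I_n -> R) (v : 'cV[R[i]]_n) :
  (forall i j, M i j = if i == j then (d i)%:C else 0) ->
  qform M v = (\sum_k d k * cmod (v k 0) ^+ 2)%:C.
Proof.
move=> hM; rewrite /qform !mxE rmorph_sum /=.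
apply: eq_bigr => j _; rewrite !mxE (bigD1 j) //= big1 ?addr0; last first.
  by move=> i /negPf hij; rewrite hM hij mulr0.
rewrite hM eqxx !mxE rmorphM /= -conjM; ring.
Qed.

Lemma mul_diagE (M : 'M[R[i]]_n) (d : 'I_n -> R) (z : 'I_n -> R[i]) k :
  (forall i j, M i j = if i == j then (d i)%:C else 0) ->
  (M *m colv z) k 0 = (d k)%:C * z k.
Proof.
move=> hM; rewrite !mxE (bigD1 k) //= big1 ?addr0; last first.
  by move=> i /negPf hij; rewrite hM eq_sym hij mul0r.
by rewrite hM eqxx mxE.
Qed.

Variables (a : 'I_n -> R) (beta : R).
Hypothesis hb : 0 < beta.

Definition gg (v : 'I_n -> R) := \sum_k (2^-1 * a k * v k + beta / 2 * v k ^+ 2).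
Definition ww (v : 'I_n -> R) k := a k + 2 * beta * v k.
Definition SS (u v : 'I_n -> R) := \sum_k ww u k * (v k - u k).
Definition QQ (u v : 'I_n -> R) := \sum_k (v k - u k) ^+ 2.

Lemma Adiag_entries i j : Adiag a i j = if i == j then (a i)%:C else 0.
Proof. by rewrite /Adiag !mxE; case: eqP => _; rewrite ?mulr1n ?mulr0n. Qed.

Lemma fobjE z : fobj a beta z = gg (abs2 z).
Proof.
rewrite /fobj (qform_diagE _ _ _ Adiag_entries) /= /gg big_split /= !mulr_sumr.
congr (_ + _); apply: eq_bigr => k _; rewrite /abs2 ?mxE -?exprM; by field.
Qed.

Lemma lamE z : 2 * lam a beta z = \sum_k ww (abs2 z) k * abs2 z k.
Proof.
rewrite /lam (qform_diagE _ _ _ Adiag_entries) /= /ww.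
under [RHS]eq_bigr do rewrite mulrDl.
rewrite big_split /= mulrDr !mulr_sumr.
congr (_ + _); apply: eq_bigr => k _; rewrite /abs2 ?mxE -?exprM; by field.
Qed.

Lemma Mstat_entries z i j :
  Mstat a beta z i j = if i == j then (ww (abs2 z) i)%:C else 0.
Proof.
rewrite /Mstat !mxE /ww; case: eqP => _; rewrite ?mulr1n ?mulr0n ?addr0 //.
by rewrite rmorphD.
Qed.

Lemma Hmat_entries z i j :
  Hmat a beta z i j = if i == j then (ww (abs2 z) i - 2 * lam a beta z)%:C else 0.
Proof.
rewrite /Hmat !mxE /ww; case: eqP => _; rewrite ?mulr1n ?mulr0n ?subr0 ?addr0 //.
by rewrite rmorphB rmorphD.
Qed.


Lemma abs2_ge0 (z : 'I_n -> R[i]) k : 0 <= abs2 z k.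
Proof. exact: sqr_ge0. Qed.

Lemma abs2_eq0 (z : 'I_n -> R[i]) k : (abs2 z k == 0) = (z k == 0).
Proof. by rewrite /abs2 sqrf_eq0 cmod0. Qed.

Lemma stationaryP z : stationary a beta z <->
  exists l, forall k, z k != 0 -> ww (abs2 z) k = 2 * l.
Proof.
split=> [[l H]|[l H]]; exists l.
  move=> k zk; have := congr1 (fun M : 'cV[R[i]]_n => M k 0) H.
  rewrite /= (mul_diagE _ _ _ _ (Mstat_entries z)) !mxE => /(mulIf zk).
  exact: complexI.
apply/matrixP => k j; rewrite (ord1 j) (mul_diagE _ _ _ _ (Mstat_entries z)) !mxE.
have [->|zk] := eqVneq (z k) 0; first by rewrite !mulr0.
by rewrite H.
Qed.

Lemma psdP z : psd (Hmat a beta z) <->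
  forall k, 2 * lam a beta z <= ww (abs2 z) k.
Proof.
split=> [H k|H v].
  have := H (\col_j (if j == k then 1 else 0)).
  rewrite (qform_diagE _ _ _ (Hmat_entries z)) ler0c (bigD1 k) //= big1 ?addr0.
    by rewrite mxE eqxx normc_real normr1 expr1n mulr1 subr_ge0.
  by move=> i /negPf hik; rewrite mxE hik normc_real normr0 expr0n /= mulr0.
rewrite (qform_diagE _ _ _ (Hmat_entries z)) ler0c; apply: sumr_ge0 => k _.
by rewrite mulr_ge0 ?sqr_ge0 // subr_ge0.
Qed.


Lemma ggD u v : gg v - gg u = 2^-1 * SS u v + beta / 2 * QQ u v.
Proof.
rewrite /gg /SS /QQ -sumrB !mulr_sumr -big_split; apply: eq_bigr => k _ /=.
rewrite /ww; by field.
Qed.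

Definition line (u v : 'I_n -> R) (t : R) := fun k => u k + t * (v k - u k).

Lemma SS_line u v t : SS u (line u v t) = t * SS u v.
Proof. rewrite /SS mulr_sumr; apply: eq_bigr => k _; rewrite /line; ring. Qed.

Lemma QQ_line u v t : QQ u (line u v t) = t ^+ 2 * QQ u v.
Proof. rewrite /QQ mulr_sumr; apply: eq_bigr => k _; rewrite /line; ring. Qed.

Lemma limit_lemma (S Q t0 : R) : 0 < t0 ->
  (forall t, 0 < t <= t0 -> 0 <= t * S + t ^+ 2 * Q) -> 0 <= S.
Proof.
move=> t0p H; rewrite leNgt; apply/negP => S0.
have [Q0|Q0] := leP Q 0.
  have := H t0; rewrite t0p lexx => /(_ isT); nra.
pose t := Num.min t0 (- S / (2 * Q)).
have tp : 0 < t by rewrite lt_min t0p /= divr_gt0 // ?oppr_gt0 // mulr_gt0.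
have tle : t <= - S / (2 * Q) by rewrite ge_min lexx orbT.
have := H t; rewrite tp ge_min lexx /= => /(_ isT).
have : t * (2 * Q) <= - S by rewrite -ler_pdivlMr // mulr_gt0.
nra.
Qed.

Definition ee (j : 'I_n) : 'I_n -> R := fun k => if k == j then 1 else 0.

Lemma ee_simplex j : in_simplex (ee j).
Proof.
split=> [k|]; first by rewrite /ee; case: eqP.
rewrite (bigD1 j) //= big1 ?addr0 /ee ?eqxx // => i /negPf ->; done.
Qed.

Lemma KKT u : in_simplex u -> (forall v, in_simplex v -> 0 <= SS u v) ->
  (forall j, \sum_k ww u k * u k <= ww u j) /\
  (forall j, u j != 0 -> ww u j = \sum_k ww u k * u k).
Proof.
move=> [u0 u1] H.
set m := \sum_k ww u k * u k.
have hj j : m <= ww u j.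
  have := H _ (ee_simplex j); rewrite /SS.
  under eq_bigr do rewrite mulrBr.
  rewrite sumrB (bigD1 j) //= big1 ?addr0 /ee ?eqxx ?mulr1 ?subr_ge0 //.
  by move=> i /negPf ->; rewrite mulr0.
split=> // j uj.
have hs : \sum_k u k * (ww u k - m) = 0.
  under eq_bigr do rewrite mulrBr.
  rewrite sumrB -mulr_suml u1 mul1r /m; under eq_bigr do rewrite mulrC.
  by rewrite subrr.
have hk k : true -> 0 <= u k * (ww u k - m) by move=> _; rewrite mulr_ge0 // subr_ge0.
have := psumr_eq0P hk hs (i:=j) isT.
move/eqP; rewrite mulf_eq0 (negPf uj) /= subr_eq0 => /eqP //.
Qed.

Lemma KKT_conv u l : in_simplex u -> (forall k, 2 * l <= ww u k) ->
  (forall k, u k != 0 -> ww u k = 2 * l) -> forall v, in_simplex v -> 0 <= SS u v.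
Proof.
move=> [u0 u1] hl he v [v0 v1].
rewrite /SS; under eq_bigr do rewrite mulrBr. rewrite sumrB.
have -> : \sum_k ww u k * u k = 2 * l.
  transitivity (\sum_k 2 * l * u k); last by rewrite -mulr_sumr u1 mulr1.
  apply: eq_bigr => k _.
  have [->|uk] := eqVneq (u k) 0; first by rewrite !mulr0.
  by rewrite he.
rewrite subr_ge0; apply: (@le_trans _ _ (\sum_k 2 * l * v k)).
  by rewrite -mulr_sumr v1 mulr1.
by apply: ler_sum => k _; rewrite ler_wpM2r.
Qed.


Lemma sqrt_diff (x y : R) : 0 <= x -> 0 <= y ->
  (Num.sqrt x - Num.sqrt y) ^+ 2 <= `|x - y|.
Proof.
move=> hx hy; rewrite -{2}(sqr_sqrtr hx) -{2}(sqr_sqrtr hy).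
have := sqrtr_ge0 x; have := sqrtr_ge0 y.
set p := Num.sqrt x; set q := Num.sqrt y => q0 p0.
have [pq|pq] := lerP p q.
  rewrite ler0_norm; first nra.
  by rewrite subr_le0 ler_pXn2r // nnegrE.
rewrite ger0_norm; first nra.
by rewrite subr_ge0 ler_pXn2r // ?nnegrE // ltW.
Qed.

Lemma cmodV (x : R[i]) : cmod x^-1 = (cmod x)^-1.
Proof. exact: Normc.normcV. Qed.

Definition ph (w : R[i]) : R[i] := if w == 0 then 1 else w / (cmod w)%:C.

Lemma realC_neq0 (x : R) : x != 0 -> x%:C != 0 :> R[i].
Proof. by move=> x0; apply/eqP; case => /eqP; rewrite (negPf x0). Qed.

Lemma cmod_ph w : cmod (ph w) = 1.
Proof.
rewrite /ph; case: eqP => [_|/eqP w0]; first exact: Normc.normc1.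
have c0 : cmod w != 0 by rewrite cmod0.
rewrite cmodM cmodV normc_real ger0_norm ?cmod_ge0 // mulfV //.
Qed.

Lemma ph_decomp w : w = (Num.sqrt (cmod w ^+ 2))%:C * ph w.
Proof.
rewrite sqrtr_sqr ger0_norm ?cmod_ge0 // /ph; case: eqP => [->|/eqP w0].
  by rewrite mulr1 /cmod Normc.normc0.
have c0 : cmod w != 0 by rewrite cmod0.
by rewrite mulrC divfK // realC_neq0.
Qed.

Lemma gg_ext f g : (forall k, f k = g k) -> gg f = gg g.
Proof. by move=> H; apply: eq_bigr => k _; rewrite H. Qed.

Lemma locmin_VI z : local_min_sphere a beta z ->
  forall v, in_simplex v -> 0 <= SS (abs2 z) v.
Proof.
move=> [zs [eps [ep H]]] v [v0 v1].
set u := abs2 z.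
have u0 k : 0 <= u k by apply: abs2_ge0.
have e2 : 0 < eps ^+ 2 by rewrite exprn_gt0.
pose t0 := Num.min 1 (eps ^+ 2 / 4).
have t0p : 0 < t0 by rewrite lt_min ltr01 /= divr_gt0.
apply: (@limit_lemma _ (beta * QQ u v) t0 t0p) => t /andP [tp tle].
have /andP [t1 te] : (t <= 1) && (t <= eps ^+ 2 / 4) by rewrite -le_min.
pose ut := line u v t.
have ut0 k : 0 <= ut k.
  rewrite /ut /line; have := u0 k; have := v0 k; nra.
pose z' := fun k => (Num.sqrt (ut k))%:C * ph (z k).
have abs2z' k : abs2 z' k = ut k.
  by rewrite /abs2 /z' cmodM cmod_ph mulr1 normc_real ger0_norm ?sqrtr_ge0 // sqr_sqrtr.
have sph : on_sphere z'.
  rewrite /on_sphere; under eq_bigr do rewrite abs2z'.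
  rewrite /ut /line big_split /= -mulr_sumr sumrB v1.
  by move: zs; rewrite /on_sphere => ->; rewrite subrr mulr0 addr0.
have dist : \sum_k cmod (z' k - z k) ^+ 2 < eps ^+ 2.
  apply: (@le_lt_trans _ _ (\sum_k t * (v k + u k))).
    apply: ler_sum => k _.
    rewrite {1}(ph_decomp (z k)) /z' -mulrBl -rmorphB cmodM cmod_ph mulr1.
    rewrite normc_real real_normK ?num_real //.
    have -> : cmod (z k) ^+ 2 = u k by []. apply: (le_trans (sqrt_diff _ _ (ut0 k) (u0 k))).
    rewrite /ut /line addrAC subrr add0r normrM (ger0_norm (ltW tp)).
    rewrite ler_wpM2l ?(ltW tp) // (le_trans (ler_normB _ _)) // !ger0_norm //.
  rewrite -mulr_sumr big_split /= v1.
  have -> : \sum_k u k = 1 by exact: zs.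
  have : t * (1 + 1) <= eps ^+ 2 / 2 by nra.
  move=> h; apply: (le_lt_trans h); rewrite ltr_pdivrMr //; nra.
have := H z' sph dist; rewrite !fobjE (gg_ext _ _ abs2z') -subr_ge0 ggD SS_line QQ_line.
rewrite -/u [in X in _ -> X]mulrCA; set X := t * SS u v; set Y := beta * (t ^+ 2 * QQ u v).
have e : beta / 2 * (t ^+ 2 * QQ u v) = 2^-1 * Y.
  by rewrite /Y [beta / 2]mulrC -mulrA.
rewrite e; lra.
Qed.


Definition carg (w : R[i]) : R :=
  if 0 <= complex.Im w then acos (complex.Re w) else 2 * pi - acos (complex.Re w).

Lemma polar (w : R[i]) : cmod w = 1 ->
  0 <= carg w < 2 * pi /\ w = (cos (carg w) +i* sin (carg w))%C.
Proof.
case: w => c s h; rewrite /carg /=.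
have h2 : c ^+ 2 + s ^+ 2 = 1 by rewrite -(cmod2 (c +i* s)%C) h expr1n.
have hc : -1 <= c <= 1 by apply/andP; split; nra.
have hcin : c \in `[-1, 1] by rewrite in_itv /= hc.
have sa : sin (acos c) = `|s|.
  by rewrite sin_acos // (_ : 1 - c ^+ 2 = s ^+ 2) ?sqrtr_sqr //; lra.
have pp := pi_gt0 R.
have api : acos c <= pi by apply: acos_lepi.
have [s0|s0] := lerP 0 s.
  split.
    by rewrite acos_ge0 //= (le_lt_trans api) //; lra.
  by rewrite acosK // sa ger0_norm.
have c1 : c < 1 by nra.
have ag : 0 < acos c by apply: acos_gt0; rewrite c1 andbT; case/andP: hc.
split.
  apply/andP; split; lra.
rewrite cosB sinB mulr_natl cos2pi sin2pi acosK // sa ltr0_norm //.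
by congr Complex; lra.
Qed.

Definition xx k := - a k / (2 * beta).

Lemma hh_identity u v :
  \sum_k (v k - xx k) ^+ 2 - \sum_k (u k - xx k) ^+ 2 = beta^-1 * SS u v + QQ u v.
Proof.
have b0 : beta != 0 by rewrite gt_eqF.
rewrite /SS /QQ -sumrB mulr_sumr -big_split; apply: eq_bigr => k _ /=.
rewrite /ww /xx; by field.
Qed.

End C.

Theorem theorem6 (R : realType) (n : nat) (a : 'I_n -> R) (beta : R) :
  0 < beta ->
  (forall z : 'I_n -> R[i], on_sphere z ->
     (local_min_sphere a beta z <->
      (stationary a beta z /\ psd (Hmat a beta z)))) /\
  (forall z : 'I_n -> R[i], local_min_sphere a beta z ->
     forall u : 'I_n -> R, is_proj_simplex (fun k => - a k / (2 * beta)) u ->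
     exists theta : 'I_n -> R, forall k,
       0 <= theta k < 2 * pi /\
       z k = ((Num.sqrt (u k))%:C * (cos (theta k) +i* sin (theta k)))%C).
Proof.
move=> hb; split.
  move=> z zs; have us : in_simplex (abs2 z) by split=> // k; exact: abs2_ge0.
  split.
    move=> lm; have VI := @locmin_VI _ _ a beta z lm.
    have [K1 K2] := @KKT _ _ a beta _ us VI.
    have lamv := @lamE _ _ a beta z.
    split.
      apply/(@stationaryP _ _ a beta); exists (lam a beta z) => k zk.
      by rewrite lamv K2 // abs2_eq0.
    by apply/(@psdP _ _ a beta) => k; rewrite lamv; exact: K1.
  case=> /(@stationaryP _ _ a beta) [l hl] /(@psdP _ _ a beta) hp.
  have ll : 2 * lam a beta z = 2 * l.
    rewrite (@lamE _ _ a beta); transitivity (\sum_k 2 * l * abs2 z k); last first.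
      by rewrite -mulr_sumr; move: zs; rewrite /on_sphere => ->; rewrite mulr1.
    apply: eq_bigr => k _; have [z0|z0] := eqVneq (z k) 0.
      by rewrite /abs2 z0 /cmod Normc.normc0 expr0n /= !mulr0.
    by rewrite hl.
  have he k : abs2 z k != 0 -> @ww _ _ a beta (abs2 z) k = 2 * lam a beta z.
    by rewrite ll abs2_eq0; exact: hl.
  have VI := @KKT_conv _ _ a beta _ _ us hp he.
  split=> //; exists 1; split=> // w' ws _.
  rewrite !(@fobjE _ _ a beta) -subr_ge0 (@ggD _ _ a beta); apply: addr_ge0; apply: mulr_ge0.
  - by rewrite invr_ge0.
  - by apply: VI; split=> // k; exact: abs2_ge0.
  - by rewrite divr_ge0 // ltW.
  - by apply: sumr_ge0 => k _; exact: sqr_ge0.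
move=> z lm u [hu hproj].
have zs := lm.1.
have us : in_simplex (abs2 z) by split=> // k; exact: abs2_ge0.
have VI := @locmin_VI _ _ a beta z lm.
have hh := @hh_identity _ _ a beta hb (abs2 z) u.
rewrite /xx in hh.
have H1 := hproj _ us.
have S0 := VI u hu.
have bS : 0 <= beta^-1 * SS _ _ a beta (abs2 z) u by rewrite mulr_ge0 // invr_ge0 ltW.
have Q0 : 0 <= QQ _ _ (abs2 z) u by apply: sumr_ge0 => k _; exact: sqr_ge0.
have Qe : QQ _ _ (abs2 z) u = 0 by lra.
have uk k : u k = abs2 z k.
  have hk : forall k, true -> 0 <= (u k - abs2 z k) ^+ 2 by move=> *; exact: sqr_ge0.
  have := psumr_eq0P hk Qe (i:=k) isT.
  by move/eqP; rewrite sqrf_eq0 subr_eq0 => /eqP.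
exists (fun k => carg _ (ph _ (z k))) => k.
have [hb1 he1] := polar _ _ (cmod_ph _ (z k)).
split=> //; rewrite -he1 uk; exact: ph_decomp.
Qed.
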